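(* Let $\mathcal{P}$ be a filtered meet-semilattice and $F\colon\mathcal{P}\to\mathrm{SSets}$ a weak Mackey functor with a quasi-unit. Then $F$ is cofibrant, i.e. the natural map of simplicial sets $\operatorname{colim}_{\mathcal{P}_{<i}}F\to F(i)$ is (degreewise) injective for every $i\in\mathcal{P}$.
   Context: A filtered meet-semilattice is a poset in which any two elements $j,k$ have a meet $j\wedge k$, equipped with $d\colon\mathcal{P}\to\mathbb{N}$ with $d(i)<d(j)$ whenever $i<j$. (Cofibrant refers to the Reedy model structure on $\operatorname{Fun}(\mathcal{P},\mathrm{SSets})$, in which a functor is cofibrant exactly when these natural maps are injective.) $F(j<i)$ is the image of the arrow $j\to i$; $F(i<i)$ and $G(i<i)$ are identities. A weak Mackey functor $F\colon\mathcal{P}\to\mathrm{SSets}$ is a covariant functor with maps $G(j<i)\colon F(i)\to F(j)$ for $j<i$ such that for all $j<i,k<i$ there are $\alpha(i,j,k)\in\operatorname{End}(F(j))$, $\beta(i,j,k)\in\operatorname{End}(F(k\wedge j))$ with $G(j<i)\circ F(k<i)=\alpha(i,j,k)\circ F(k\wedge j<j)\circ G(k\wedge j<k)=F(k\wedge j<j)\circ\beta(i,j,k)\circ G(k\wedge j<k)$; it has a quasi-unit if $\alpha(i,j,j)$ is an automorphism of $F(j)$ for all $j<i$. *)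

(* Defs.v *)
From HB Require Import structures.
From mathcomp Require Import all_boot all_order.
From Stdlib Require Import Relations.
Set Implicit Arguments. Unset Strict Implicit. Unset Printing Implicit Defensive.
Import Order.Theory.
Local Open Scope order_scope.

(* face n i : X_(n+1) -> X_n for 0 <= i <= n+1, degen n i : X_n -> X_(n+1) for 0 <= i <= n.
   Out-of-range indices are irrelevant (no condition is imposed on them). *)
Record SSet := {
  sobj :> nat -> Type;
  face : forall n : nat, nat -> sobj n.+1 -> sobj n;
  degen : forall n : nat, nat -> sobj n -> sobj n.+1;
  face_face : forall n i j x, (i < j)%N -> (j <= n.+2)%N ->
     face i (face j x) = face j.-1 (face (n := n.+1) i x);
  face_degen_lt : forall n i j x, (i < j)%N -> (j <= n.+1)%N ->
     face i (degen (n := n.+1) j x) = degen j.-1 (face (n := n) i x);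
  face_degen_eq : forall n j x, (j <= n)%N ->
     face j (degen (n := n) j x) = x /\ face j.+1 (degen (n := n) j x) = x;
  face_degen_gt : forall n i j x, (j.+1 < i)%N -> (i <= n.+2)%N ->
     face i (degen (n := n.+1) j x) = degen j (face (n := n) i.-1 x);
  degen_degen : forall n i j x, (i <= j)%N -> (j <= n)%N ->
     degen i (degen (n := n) j x) = degen j.+1 (degen (n := n) i x)
}.

Record SMap (X Y : SSet) := {
  smap :> forall n : nat, X n -> Y n;
  smap_face : forall n i (x : X n.+1), (i <= n.+1)%N -> smap (face i x) = face i (smap x);
  smap_degen : forall n i (x : X n), (i <= n)%N -> smap (degen i x) = degen i (smap x)
}.

Definition smap_eq (X Y : SSet) (f g : SMap X Y) : Prop :=
  forall n (x : X n), f n x = g n x.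

Definition sapply (X Y Z : SSet) (g : SMap Y Z) (f : SMap X Y) n (x : X n) : Z n :=
  g n (f n x).

Definition is_automorphism (X : SSet) (f : SMap X X) : Prop :=
  exists g : SMap X X, forall n (x : X n), g n (f n x) = x /\ f n (g n x) = x.

Section Mackey.
Context {disp : Order.disp_t} {P : meetSemilatticeType disp}.

(* filtered meet-semilattice: a degree function strictly increasing along < *)
Definition filtration (d : P -> nat) : Prop := forall i j : P, i < j -> (d i < d j)%N.

Context (F : P -> SSet).

Definition is_functor (Fm : forall j i : P, j <= i -> SMap (F j) (F i)) : Prop :=
  (forall i (h : i <= i) n (x : F i n), Fm _ _ h n x = x) /\
  (forall j k i (hjk : j <= k) (hki : k <= i) (hji : j <= i) n (x : F j n),
      Fm _ _ hki n (Fm _ _ hjk n x) = Fm _ _ hji n x).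

(* Weak Mackey functor with quasi-unit: maps G(j<=i) : F i -> F j with G(i<=i) = id,
   and endomorphisms alpha(i,j,k) of F j, beta(i,j,k) of F (k /\ j), satisfying the
   double-coset-type identities for j < i, k < i; quasi-unit: alpha(i,j,j) automorphism. *)
Definition weak_Mackey_quasi_unit
    (Fm : forall j i : P, j <= i -> SMap (F j) (F i))
    (Gm : forall j i : P, j <= i -> SMap (F i) (F j)) : Prop :=
  (forall i (h : i <= i) n (x : F i n), Gm _ _ h n x = x) /\
  exists (alpha : forall i j k : P, SMap (F j) (F j))
         (beta : forall i j k : P, SMap (F (k `&` j)) (F (k `&` j))),
    (forall i j k : P, j < i -> k < i ->
       forall (hji : j <= i) (hki : k <= i) (h1 : k `&` j <= j) (h2 : k `&` j <= k)
              n (x : F k n),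
         Gm _ _ hji n (Fm _ _ hki n x) = alpha i j k n (Fm _ _ h1 n (Gm _ _ h2 n x)) /\
         alpha i j k n (Fm _ _ h1 n (Gm _ _ h2 n x)) = Fm _ _ h1 n (beta i j k n (Gm _ _ h2 n x))) /\
    (forall i j : P, j < i -> is_automorphism (alpha i j j)).

(* Degree-n part of colim_{P_{<i}} F, computed (as for any colimit of simplicial sets)
   degreewise: pairs (j, x) with j < i and x in F(j)_n, modulo the equivalence relation
   generated by (j, x) ~ (k, F(j<=k) x). *)
Record cocell (i : P) (n : nat) := Cocell { cj : P; clt : cj < i; cx : F cj n }.

Definition colim_step (Fm : forall j i : P, j <= i -> SMap (F j) (F i)) i n
    (a b : cocell i n) : Prop :=
  exists h : cj a <= cj b, Fm _ _ h n (cx a) = cx b.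

Definition colim_rel Fm i n := clos_refl_sym_trans _ (@colim_step Fm i n).

Definition colim_map (Fm : forall j i : P, j <= i -> SMap (F j) (F i)) i n
    (a : cocell i n) : F i n := Fm (cj a) i (ltW (clt a)) n (cx a).

(* Reedy cofibrancy: the natural map from the colimit is degreewise injective,
   i.e. injective on equivalence classes. *)
Definition cofibrant (Fm : forall j i : P, j <= i -> SMap (F j) (F i)) : Prop :=
  forall (i : P) (n : nat) (a b : cocell i n),
    colim_map Fm a = colim_map Fm b -> colim_rel Fm a b.

End Mackey.

(* Main.v *)
Require Import Defs.
From mathcomp Require Import all_boot all_order.
From Stdlib Require Import Relations.
Import Order.Theory.
Local Open Scope order_scope.

Theorem lemma3p8 (disp : Order.disp_t) (P : meetSemilatticeType disp)
  (d : P -> nat) (hd : filtration d)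
  (F : P -> SSet)
  (Fm : forall j i : P, j <= i -> SMap (F j) (F i))
  (Gm : forall j i : P, j <= i -> SMap (F i) (F j))
  (hF : is_functor Fm)
  (hM : weak_Mackey_quasi_unit Fm Gm) :
  cofibrant Fm.
Proof.
  case: hF => hFid hFc.
  case: hM => hGid [alpha [beta [hmack hunit]]].
  have L : forall q p (e : p = q) (h1 h2 : p <= q) n (x : F q n),
      Fm p q h1 n (Gm p q h2 n x) = x.
    by move=> q p e; subst p => h1 h2 n x; rewrite hGid hFid.
  have FmP : forall j i (h h' : j <= i) n x, Fm j i h n x = Fm j i h' n x.
    by move=> j i h h' n x; rewrite (eq_irrelevance h h').
  have GmP : forall j i (h h' : j <= i) n x, Gm j i h n x = Gm j i h' n x.
    by move=> j i h h' n x; rewrite (eq_irrelevance h h').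
  have GF : forall j i (hji : j < i) h1 h2 n z,
      Gm j i h1 n (Fm j i h2 n z) = alpha i j j n z.
    move=> j i hji h1 h2 n z.
    have [H _] := hmack i j j hji hji h1 h2 (leIl j j) (leIl j j) n z.
    by rewrite H L // meetxx.
  have Finj : forall j i (hji : j < i) h n x y,
      Fm j i h n x = Fm j i h n y -> x = y.
    move=> j i hji h n x y E.
    have := congr1 (Gm j i h n) E; rewrite !(GF _ _ hji) => E'.
    case: (hunit i j hji) => g hg.
    by rewrite -(proj1 (hg n x)) E' (proj1 (hg n y)).
  move=> i n [j hj x] [k hk y]; rewrite /colim_map /= => E.
  have hji := ltW hj; have hki := ltW hk.
  move: E; rewrite (FmP _ _ (ltW hj) hji) (FmP _ _ (ltW hk) hki) => E.
  case: (boolP (k <= j)) => hkj.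
    apply: rst_sym; apply: rst_step; exists hkj => /=.
    apply: (Finj j i hj hji); rewrite E.
    by rewrite (hFc k j i hkj hji hki).
  set m := k `&` j.
  have hmk : m <= k by apply: leIl.
  have hmj : m <= j by apply: leIr.
  have hmkl : m < k.
    rewrite lt_neqAle hmk andbT; apply/negP => /eqP e.
    by move: hkj; rewrite -e leIr.
  have hmi : m < i by apply: le_lt_trans hmj hj.
  have hmi' := ltW hmi.
  have GFk : forall z, Gm m k hmk n (Fm m k hmk n z) = alpha k m m n z.
    by move=> z; apply: GF.
  case: (hunit k m hmkl) => g hg.
  set v := Gm m k hmk n y.
  set u := g n v.
  have hu : Gm m k hmk n (Fm m k hmk n u) = v.
    by rewrite GFk /u (proj2 (hg n v)).
  have [H1 _] := hmack i j k hj hk hji hki hmj hmk n y.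
  have [H2 _] := hmack i j k hj hk hji hki hmj hmk n (Fm m k hmk n u).
  rewrite hu -/v in H2.
  rewrite -E GF // in H1.
  rewrite -H1 (hFc m k i hmk hki hmi') -(hFc m j i hmj hji hmi') GF // in H2.
  have hx : x = Fm m j hmj n u.
    case: (hunit i j hj) => g' hg'.
    by rewrite -(proj1 (hg' n x)) -H2 (proj1 (hg' n _)).
  have hy : Fm m k hmk n u = y.
    apply: (Finj k i hk hki).
    by rewrite (hFc m k i hmk hki hmi') -E hx (hFc m j i hmj hji hmi').
  apply: (rst_trans _ _ _ (Cocell hmi u)).
    by apply: rst_sym; apply: rst_step; exists hmj => /=; rewrite hx.
  by apply: rst_step; exists hmk.
Qed.
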